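(* Let $n\geq 1$ and $k\geq 2$ be integers. Then \[C_k(n)\leq \sum_{t=1}^{\lfloor n/2\rfloor} k^t A_k(n-2t,0^t)+n k^{\lceil n/2\rceil},\] where $0^t$ denotes the word consisting of $t$ zeros.
   Context: Words are over $\Sigma_k=\{0,1,\ldots,k-1\}$. A border of a word $w$ is a non-empty word that is both a proper prefix and a proper suffix of $w$. A word $w$ is closed if $|w|\leq 1$ or if $w$ has a border that occurs exactly twice in $w$ as a factor (overlapping occurrences counted). $C_k(n)$ denotes the number of closed words of length $n$ over $\Sigma_k$. $A_k(m,v)$ denotes the number of words of length $m$ over $\Sigma_k$ that do not contain $v$ as a factor (for $m=0$ the empty word is counted). *)

(* Defs.v *)
From mathcomp Require Import all_boot.
Set Implicit Arguments. Unset Strict Implicit. Unset Printing Implicit Defensive.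

Definition occ (T : eqType) (u w : seq T) : nat :=
  count (fun i => take (size u) (drop i w) == u) (iota 0 (size w - size u).+1).

Definition is_border (T : eqType) (u w : seq T) : bool :=
  [&& 0 < size u, size u < size w, prefix u w & suffix u w].

(* closed word: |w| <= 1, or some border occurs exactly twice in w.
   Every border is a prefix take i w with 0 < i < |w|. *)
Definition closed_word (T : eqType) (w : seq T) : bool :=
  (size w <= 1) ||
  has (fun i => is_border (take i w) w && (occ (take i w) w == 2))
      (iota 1 (size w)).

Definition C (k n : nat) : nat :=
  #|[set w : n.-tuple 'I_k | closed_word (w : seq 'I_k)]|.

Definition A (k m : nat) (v : seq 'I_k) : nat :=
  #|[set w : m.-tuple 'I_k | ~~ infix v (w : seq 'I_k)]|.

Definition zeros (k t : nat) (hk : 0 < k) : seq 'I_k := nseq t (Ordinal hk).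
Arguments A k m v : clear implicits.
Arguments C k n : clear implicits.
Arguments zeros k t hk : clear implicits.

(* Main.v *)
Require Import Defs.
From mathcomp Require Import all_boot zify.
Set Implicit Arguments. Unset Strict Implicit. Unset Printing Implicit Defensive.

Definition sw (T : eqType) (z a c : T) : T :=
  if c == a then z else if c == z then a else c.

Lemma swK (T : eqType) (z a : T) : involutive (sw z a).
Proof.
move=> c; rewrite /sw.
case: (eqVneq c a) => [->|hca]; first by rewrite eqxx; case: (eqVneq z a).
case: (eqVneq c z) => [->|hcz]; first by rewrite eqxx.
by rewrite (negbTE hca) (negbTE hcz).
Qed.

Lemma sw_eqz (T : eqType) (z a c : T) : (sw z a c == z) = (c == a).
Proof.
rewrite /sw; case: (c =P a) => [_ | hca]; first by rewrite /= eqxx.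
case: (c =P z) => [hcz | /eqP hcz]; last by rewrite (negbTE hcz).
by apply/eqP => haz; apply: hca; rewrite hcz haz.
Qed.

Definition st (T : eqType) (u x : seq T) : nat :=
  \max_(j < (size u).+1 | suffix (take j u) x) j.

Lemma st_le (T : eqType) (u x : seq T) : st u x <= size u.
Proof. by apply/bigmax_leqP => j _; rewrite -ltnS. Qed.

Lemma st_ge (T : eqType) (u x : seq T) j :
  j <= size u -> suffix (take j u) x -> j <= st u x.
Proof.
rewrite -ltnS => hj hs.
exact: (leq_bigmax_cond (Ordinal hj) (F := fun j : 'I_(size u).+1 => nat_of_ord j)).
Qed.

Lemma st_spec (T : eqType) (u x : seq T) : suffix (take (st u x) u) x.
Proof.
rewrite /st; elim/big_ind: _ => //; first by rewrite take0 suffix0s.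
by move=> a b ha hb; rewrite /maxn; case: ifP.
Qed.

Lemma st_rcons_le (T : eqType) (u x : seq T) c : st u (rcons x c) <= (st u x).+1.
Proof.
have := st_spec u (rcons x c); have := st_le u (rcons x c).
case: (st u (rcons x c)) => // j hj.
rewrite (take_nth c hj) suffix_rcons => /andP[_ hs].
by rewrite ltnS; apply: st_ge => //; apply: ltnW.
Qed.

Lemma st_rcons_ge (T : eqType) (u x : seq T) c :
  st u x < size u -> (st u x).+1 <= st u (rcons x (nth c u (st u x))).
Proof.
move=> h; apply: st_ge => //.
by rewrite (take_nth c h) suffix_rcons eqxx st_spec.
Qed.

Lemma st_full (T : eqType) (u x : seq T) : st u x = size u -> infix u x.
Proof. by move=> h; have := st_spec u x; rewrite h take_size; apply: suffixW. Qed.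

Definition trun (T : eqType) (z : T) (y : seq T) : nat :=
  foldl (fun r d => if d == z then r.+1 else 0) 0 y.

Lemma trun_rcons (T : eqType) (z : T) y d :
  trun z (rcons y d) = if d == z then (trun z y).+1 else 0.
Proof. by rewrite /trun foldl_rcons. Qed.

Lemma nseqSr (T : Type) (z : T) t : nseq t.+1 z = rcons (nseq t z) z.
Proof. by elim: t => //= t ->. Qed.

Lemma trun_nseq (T : eqType) (z : T) t y : suffix (nseq t z) y -> t <= trun z y.
Proof.
elim: t y => // t IH y; rewrite nseqSr.
case/lastP: y => [|y d]; first by rewrite suffixs0; case: (nseq t z).
rewrite suffix_rcons trun_rcons => /andP[/eqP <- hs].
by rewrite eqxx ltnS IH.
Qed.

Fixpoint phi (T : eqType) (z : T) (u acc x : seq T) : seq T :=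
  match x with
  | [::] => [::]
  | c :: x' => sw z (nth z u (st u acc)) c :: phi z u (rcons acc c) x'
  end.

Lemma size_phi (T : eqType) (z : T) u acc x : size (phi z u acc x) = size x.
Proof. by elim: x acc => //= c x IH acc; rewrite IH. Qed.

Lemma phi_inj (T : eqType) (z : T) u acc x y :
  phi z u acc x = phi z u acc y -> x = y.
Proof.
elim: x acc y => [|c x IH] acc [|d y] //= [].
move=> /(can_inj (swK _ _)) <- /IH -> //.
Qed.

Lemma phi_avoid (T : eqType) (z : T) u x acc out :
  trun z out <= st u acc -> ~~ infix u (acc ++ x) ->
  ~~ infix (nseq (size u) z) out ->
  ~~ infix (nseq (size u) z) (out ++ phi z u acc x).
Proof.
elim: x acc out => [|c x IH] acc out h1 h2 h3 /=; first by rewrite cats0.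
have lt1 : st u acc < size u.
  rewrite ltn_neqAle st_le andbT; apply/negP => /eqP /st_full hi.
  by move: h2; rewrite (infix_catr _ hi).
have lt2 : st u (rcons acc c) < size u.
  rewrite ltn_neqAle st_le andbT; apply/negP => /eqP /st_full hi.
  by move: h2; rewrite -cat_rcons (infix_catr _ hi).
have h1' : trun z (rcons out (sw z (nth z u (st u acc)) c)) <= st u (rcons acc c).
  rewrite trun_rcons sw_eqz; case: eqP => // ->.
  by apply: leq_trans (st_rcons_ge z lt1); rewrite ltnS.
rewrite -cat_rcons; apply: IH => //; first by rewrite cat_rcons.
rewrite infix_rconsl negb_or h3 andbT; apply/negP => /trun_nseq.
by move=> h; have := leq_ltn_trans h1' lt2; rewrite ltnNge h.
Qed.

Lemma card_cover (T : finType) (A : {set T}) (r : seq nat) (F : nat -> {set T}) :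
  (forall x, x \in A -> has (fun i => x \in F i) r) ->
  #|A| <= \sum_(i <- r) #|F i|.
Proof.
elim: r A => [|i r IH] A hA.
  rewrite big_nil leqn0 cards_eq0; apply/eqP/setP => x; rewrite inE.
  by apply/negP => /hA.
rewrite big_cons -(cardsID (F i) A) leq_add //.
  by apply: subset_leq_card; apply: subsetIr.
apply: IH => x; rewrite inE => /andP[hx /hA] /=.
by rewrite (negbTE hx).
Qed.

Lemma decomp (T : eqType) (w : seq T) n t :
  size w = n -> t.*2 <= n -> suffix (take t w) w ->
  w = take t w ++ drop t (take (n - t) w) ++ take t w.
Proof.
move=> hs ht; rewrite suffixE size_takel ?hs; last by lia.
move=> /eqP hd.
transitivity (take (n - t) w ++ drop (n - t) w); first by rewrite cat_take_drop.
rewrite hd catA; congr (_ ++ _).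
by rewrite -{1}(cat_take_drop t (take (n - t) w)) take_takel //; lia.
Qed.

Section Count.
Variables (n k : nat) (hk0 : 0 < k).
Let z : 'I_k := Ordinal hk0.

Definition S1 t := [set w : n.-tuple 'I_k |
  suffix (take t w) w && ~~ infix (take t w) (drop t (take (n - t) w))].
Definition S2 i := [set w : n.-tuple 'I_k | (n < i.*2) && suffix (take i w) w].

Lemma S1_card t : 1 <= t -> t.*2 <= n -> #|S1 t| <= k ^ t * A k (n - t.*2) (zeros k t hk0).
Proof.
move=> ht1 ht2.
pose g (w : n.-tuple 'I_k) : t.-tuple 'I_k * (n - t.*2).-tuple 'I_k :=
  (insubd (nseq_tuple t z) (take t w),
   insubd (nseq_tuple (n - t.*2) z) (phi z (take t w) [::] (drop t (take (n - t) w)))).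
have hst (w : n.-tuple 'I_k) : size (take t w) = t by rewrite size_takel //; rewrite size_tuple; lia.
have hsm (w : n.-tuple 'I_k) : size (drop t (take (n - t) w)) = n - t.*2.
  by rewrite size_drop size_takel; [lia | rewrite size_tuple; lia].
have v1 (w : n.-tuple 'I_k) : val (g w).1 = take t w by rewrite val_insubd hst eqxx.
have v2 (w : n.-tuple 'I_k) : val (g w).2 = phi z (take t w) [::] (drop t (take (n - t) w)).
  by rewrite val_insubd size_phi hsm eqxx.
rewrite -(card_in_imset (f := g)); last first.
  move=> w1 w2; rewrite !inE => /andP[hs1 _] /andP[hs2 _] he.
  have e1 : take t w1 = take t w2 by rewrite -v1 he v1.
  have e2 : drop t (take (n - t) w1) = drop t (take (n - t) w2).
    by apply: (@phi_inj _ z (take t w1) [::]); rewrite -v2 he v2 e1.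
  apply: val_inj => /=.
  rewrite (decomp (size_tuple w1) ht2 hs1) (decomp (size_tuple w2) ht2 hs2).
  by rewrite e1 e2.
pose B := [set y : (n - t.*2).-tuple 'I_k | ~~ infix (zeros k t hk0) y].
have -> : k ^ t * A k (n - t.*2) (zeros k t hk0) = #|setX [set: t.-tuple 'I_k] B|.
  by rewrite cardsX cardsT card_tuple card_ord.
apply: subset_leq_card; apply/subsetP => _ /imsetP[w hw ->].
rewrite !inE /=; rewrite inE in hw; case/andP: hw => _ hw.
rewrite v2 /zeros -/z -{1}(hst w).
have := @phi_avoid _ z (take t w) (drop t (take (n - t) w)) [::] [::].
apply => //.
by rewrite infixs0 hst; case: (t) ht1.
Qed.

Lemma S2_card i : i < n -> #|S2 i| <= k ^ (uphalf n).
Proof.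
move=> hi.
pose h (w : n.-tuple 'I_k) : (uphalf n).-tuple 'I_k := insubd (nseq_tuple _ z) (take (uphalf n) w).
have hh : uphalf n <= n by rewrite uphalfE -divn2; lia.
have vh (w : n.-tuple 'I_k) : val (h w) = take (uphalf n) w.
  by rewrite val_insubd size_takel ?size_tuple ?eqxx.
rewrite -(card_in_imset (f := h)); last first.
  move=> w1 w2; rewrite !inE => /andP[hn hs1] /andP[_ hs2] he.
  have e : take (uphalf n) w1 = take (uphalf n) w2 by rewrite -!vh he.
  apply: val_inj => /=; apply: (@eq_from_nth _ z); first by rewrite !size_tuple.
  rewrite size_tuple.
  have hd (w : n.-tuple 'I_k) : suffix (take i w) w -> drop (n - i) w = take i w.
    by rewrite suffixE size_takel ?size_tuple; [move/eqP | lia].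
  move: (hd _ hs1) (hd _ hs2) => d1 d2.
  suff H : forall m j, j < m -> j < n -> nth z w1 j = nth z w2 j.
    by move=> j hj; apply: (H j.+1).
  elim=> // m IH j hjm hjn.
  case: (ltnP j (uphalf n)) => hj.
    by rewrite -(nth_take z hj) e nth_take.
  have hp : n - i <= j by move: hj; rewrite uphalfE -divn2; lia.
  have -> : j = (n - i) + (j - (n - i)) by lia.
  rewrite -!nth_drop d1 d2 !nth_take; try lia.
  apply: IH; lia.
apply: leq_trans (max_card _) _.
by rewrite card_tuple card_ord.
Qed.

End Count.

Lemma cover n k (w : n.-tuple 'I_k) : 2 <= n -> closed_word (w : seq 'I_k) ->
  has (fun t => w \in S1 n k t) (index_iota 1 (n./2.+1)) ||
  has (fun i => w \in S2 n k i) (index_iota 0 n).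
Proof.
move=> hn; rewrite /closed_word size_tuple leqNgt hn /=.
case/hasP => i; rewrite mem_iota => /andP[hi1 _].
case/andP => /and4P[h0 hlt _ hsuf] /eqP hocc.
have hin : i < n.
  case: (ltnP i n) => // hni; move: hlt; rewrite take_oversize ?size_tuple //.
  by rewrite ltnn.
have hst : size (take i w) = i by rewrite size_takel // size_tuple ltnW.
case: (leqP i.*2 n) => h2.
  apply/orP; left; apply/hasP; exists i.
    by rewrite mem_index_iota -divn2; lia.
  rewrite inE hsuf /=; apply/negP => /infixP [a [b hm]].
  have hw := decomp (size_tuple w) h2 hsuf.
  set u := take i w in hst hw hm hocc.
  have hsm : size (drop i (take (n - i) w)) = n - i.*2.
    by rewrite size_drop size_takel; [lia | rewrite size_tuple; lia].
  rewrite hm size_cat size_cat hst in hsm.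
  move: hsm h2; rewrite -addnn => hsm h2.
  have hd : drop (n - i) w = u.
    by move: hsuf; rewrite suffixE size_tuple -/u hst => /eqP.
  pose P := fun p => take (size u) (drop p w) == u.
  have hu : uniq [:: 0; i + size a; n - i].
    rewrite /= !inE negb_or andbT; apply/andP; split; [apply/andP; split|]; apply/negP => /eqP; lia.
  have : size [:: 0; i + size a; n - i] <= size (filter P (iota 0 (size w - size u).+1)).
    apply: uniq_leq_size => // p.
    rewrite !inE mem_filter mem_iota size_tuple hst /P.
    case/or3P => /eqP ->; apply/andP; split; try lia.
    - by rewrite drop0 hst.
    - rewrite hw hm -!catA catA drop_size_cat; last by rewrite size_cat hst.
      by rewrite take_size_cat.
    - move: hsm; set sa := size a => hsm. lia.
    - by rewrite hd take_size.
  rewrite size_filter; move: hocc; rewrite /occ -/P => ->.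
  done.
apply/orP; right; apply/hasP; exists i; first by rewrite mem_index_iota.
by rewrite inE h2 hsuf.
Qed.

Theorem corollary8 (n k : nat) (hn : 1 <= n) (hk : 2 <= k) :
  C k n <= \sum_(1 <= t < n./2.+1)
              k ^ t * A k (n - t.*2) (zeros k t (ltnW hk))
           + n * k ^ (uphalf n).
Proof.
rewrite /C.
case: (leqP n 1) => hn1.
  have e : n = 1 by lia.
  subst n; rewrite big_geq // add0n mul1n.
  by apply: leq_trans (max_card _) _; rewrite card_tuple card_ord.
set A0 := [set w : n.-tuple 'I_k | closed_word (w : seq 'I_k)].
set B := [set w : n.-tuple 'I_k | has (fun t => w \in S1 n k t) (index_iota 1 n./2.+1)].
rewrite -(cardsID B A0); apply: leq_add.
  apply: leq_trans (@card_cover _ _ (index_iota 1 n./2.+1) (S1 n k) _) _.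
    by move=> x; rewrite !inE => /andP[_].
  rewrite big_seq [X in _ <= X]big_seq; apply: leq_sum => t.
  rewrite mem_index_iota => ht; apply: S1_card; first by lia.
  by move: ht; rewrite -divn2; lia.
apply: leq_trans (@card_cover _ _ (index_iota 0 n) (S2 n k) _) _.
  move=> x; rewrite !inE => /andP[hB hc].
  by move: (@cover n k x hn1 hc); rewrite (negbTE hB).
have -> : n * k ^ uphalf n = \sum_(0 <= i < n) k ^ uphalf n.
  by rewrite sum_nat_const_nat subn0.
rewrite big_seq [X in _ <= X]big_seq; apply: leq_sum => i.
by rewrite mem_index_iota => hi; apply: (S2_card (ltnW hk)); lia.
Qed.
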